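(* Let $d\ge1$. Let $G_A=(V_A,E_A)$ with configuration $\mathbf{p}^A$ and $G_B=(V_B,E_B)$ with configuration $\mathbf{p}^B$ be two universally rigid frameworks in general position in $\mathbb{R}^d$, with $V_C=V_A\cap V_B$ a proper subset of both $V_A$ and $V_B$, $|V_C|\ge d+1$, and $\mathbf{p}^A_i=\mathbf{p}^B_i$ for $i\in V_C$. Let $F$ be the set of edges $\{i,j\}\in E_B\setminus E_A$ with $i,j\in V_C$. Then the edge-reduced framework attachment, i.e. the framework with graph $(V_A\cup V_B,(E_A\cup E_B)\setminus F)$ and configuration $\mathbf{p}$ (where $\mathbf{p}_i=\mathbf{p}^A_i$ for $i\in V_A$, $\mathbf{p}_i=\mathbf{p}^B_i$ for $i\in V_B$), is universally rigid.
   Context: A framework $G(\mathbf{p})$ in $\mathbb{R}^d$ is a finite graph $G=(V,E)$ with points $\mathbf{p}_i\in\mathbb{R}^d$, $i\in V$. It is in general position if any $d+1$ distinct vertices have affinely independent points. $G(\mathbf{p})$ and $G(\mathbf{q})$ are equivalent if they have equal lengths $\|\mathbf{p}_i-\mathbf{p}_j\|=\|\mathbf{q}_i-\mathbf{q}_j\|$ on all edges, and congruent if these equalities hold for all pairs of vertices. $G(\mathbf{p})$ in $\mathbb{R}^d$ is universally rigid if for every $d'\ge d$ every framework $G(\mathbf{q})$ in $\mathbb{R}^{d'}$ equivalent to it is congruent to it. The roles of $G_A$ and $G_B$ are interchangeable: the removed edges are those between shared vertices present in only one (fixed) of the two frameworks. *)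

(* Defs.v *)
From HB Require Import structures.
From mathcomp Require Import all_boot all_order all_algebra.
From mathcomp Require Import reals.
Set Implicit Arguments. Unset Strict Implicit. Unset Printing Implicit Defensive.
Import Order.TTheory GRing.Theory Num.Theory.
Local Open Scope ring_scope.

Definition edist (R : realType) (n : nat) (x y : 'rV[R]_n) : R :=
  Num.sqrt (\sum_(k < n) (x 0 k - y 0 k) ^+ 2).

Definition is_graph (V : finType) (Vs : {set V}) (E : rel V) : Prop :=
  (forall i j, E i j = E j i) /\ (forall i, ~~ E i i) /\
  (forall i j, E i j -> (i \in Vs) && (j \in Vs)).

Definition aff_indep (R : realType) (n m : nat) (x : 'I_m -> 'rV[R]_n) : Prop :=
  forall c : 'I_m -> R, \sum_(i < m) c i = 0 -> \sum_(i < m) c i *: x i = 0 ->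
    forall i, c i = 0.

Definition general_position (R : realType) (d : nat) (V : finType)
    (Vs : {set V}) (p : V -> 'rV[R]_d) : Prop :=
  forall f : 'I_d.+1 -> V, injective f -> (forall i, f i \in Vs) ->
    aff_indep (fun i => p (f i)).

Definition equivalent (R : realType) (d d' : nat) (V : finType) (E : rel V)
    (p : V -> 'rV[R]_d) (q : V -> 'rV[R]_d') : Prop :=
  forall i j, E i j -> edist (q i) (q j) = edist (p i) (p j).

Definition congruent (R : realType) (d d' : nat) (V : finType) (Vs : {set V})
    (p : V -> 'rV[R]_d) (q : V -> 'rV[R]_d') : Prop :=
  forall i j, i \in Vs -> j \in Vs -> edist (q i) (q j) = edist (p i) (p j).

Definition universally_rigid (R : realType) (d : nat) (V : finType)
    (Vs : {set V}) (E : rel V) (p : V -> 'rV[R]_d) : Prop :=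
  forall (d' : nat), (d <= d')%N -> forall q : V -> 'rV[R]_d',
    equivalent E p q -> congruent Vs p q.

Definition removed_edges (V : finType) (VA VB : {set V}) (EA EB : rel V) : rel V :=
  fun i j => [&& EB i j, ~~ EA i j, i \in VA :&: VB & j \in VA :&: VB].

Definition attach_edges (V : finType) (VA VB : {set V}) (EA EB : rel V) : rel V :=
  fun i j => (EA i j || EB i j) && ~~ removed_edges VA VB EA EB i j.

Definition attach_conf (R : realType) (d : nat) (V : finType) (VA : {set V})
    (pA pB : V -> 'rV[R]_d) : V -> 'rV[R]_d :=
  fun i => if i \in VA then pA i else pB i.

(* Main.v *)
Require Import Defs.
From HB Require Import structures.
From mathcomp Require Import all_boot all_order all_algebra.
From mathcomp Require Import reals.
From mathcomp Require Import ring.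
Set Implicit Arguments. Unset Strict Implicit. Unset Printing Implicit Defensive.
Import Order.TTheory GRing.Theory Num.Theory.
Local Open Scope ring_scope.

Definition sqd (R : realType) n (x y : 'rV[R]_n) : R := \sum_(k < n) (x 0 k - y 0 k) ^+ 2.
Definition dt (R : realType) n (x y : 'rV[R]_n) : R := \sum_(k < n) x 0 k * y 0 k.

Lemma sqd_dt (R : realType) n (x y : 'rV[R]_n) : sqd x y = dt x x + dt y y - 2 * dt x y.
Proof.
rewrite /sqd /dt mulr_sumr -big_split -sumrB /=; apply: eq_bigr => k _; ring.
Qed.

Lemma dt_sum (R : realType) n (I : finType) (P : I -> 'rV[R]_n) (g : I -> R) :
  dt (\sum_i g i *: P i) (\sum_i g i *: P i) =
  \sum_i \sum_j g i * g j * dt (P i) (P j).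
Proof.
rewrite /dt.
under eq_bigr => k _ do rewrite !summxE big_distrlr /=.
rewrite exchange_big /=; apply: eq_bigr => i _.
rewrite exchange_big /=; apply: eq_bigr => j _.
rewrite mulr_sumr; apply: eq_bigr => k _; rewrite !mxE; ring.
Qed.

Lemma alg_id (R : realType) (I : finType) (A : I -> R) (B : I -> I -> R) (g : I -> R) :
  \sum_i g i = 0 ->
  \sum_i \sum_j g i * g j * (A i + A j - 2 * B i j) =
  - 2 * \sum_i \sum_j g i * g j * B i j.
Proof.
move=> g0; rewrite mulr_sumr.
pose C := \sum_j g j * A j.
transitivity (\sum_i (g i * C - 2 * \sum_j g i * g j * B i j)).
  apply: eq_bigr => i _.
  have -> : \sum_j g i * g j * (A i + A j - 2 * B i j)
     = g i * A i * (\sum_j g j) + g i * C - 2 * \sum_j g i * g j * B i j.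
    rewrite /C !mulr_sumr -big_split -sumrB /=; apply: eq_bigr => j _; ring.
  by rewrite g0 mulr0 add0r.
rewrite sumrB -mulr_suml g0 mul0r sub0r -[X in - X = _]mulr_sumr.
by rewrite -mulNr mulr_sumr.
Qed.

Lemma gram_sqd (R : realType) n (I : finType) (P : I -> 'rV[R]_n) (g : I -> R) :
  \sum_i g i = 0 ->
  \sum_i \sum_j g i * g j * sqd (P i) (P j) =
  - 2 * dt (\sum_i g i *: P i) (\sum_i g i *: P i).
Proof.
move=> g0; rewrite dt_sum.
under eq_bigr => i _ do under eq_bigr => j _ do rewrite sqd_dt.
exact: (alg_id (fun i => dt (P i) (P i)) (fun i j => dt (P i) (P j)) g0).
Qed.

Lemma gram (R : realType) n n' (I : finType) (P : I -> 'rV[R]_n) (Q : I -> 'rV[R]_n') (g : I -> R) :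
  \sum_i g i = 0 -> (forall i j, sqd (Q i) (Q j) = sqd (P i) (P j)) ->
  dt (\sum_i g i *: Q i) (\sum_i g i *: Q i) = dt (\sum_i g i *: P i) (\sum_i g i *: P i).
Proof.
move=> g0 H; apply: (@mulfI _ (-2)); first by rewrite oppr_eq0 pnatr_eq0.
rewrite -!gram_sqd //; apply: eq_bigr => i _; apply: eq_bigr => j _; by rewrite H.
Qed.

Lemma dt_eq0 (R : realType) n (x : 'rV[R]_n) : dt x x = 0 -> x = 0.
Proof.
move/eqP; rewrite /dt psumr_eq0; last by move=> k _; rewrite -expr2 sqr_ge0.
move/allP => H; apply/rowP => k; rewrite mxE.
by have := H k (mem_index_enum _); rewrite -expr2 sqrf_eq0 => /eqP.
Qed.

Lemma sqd_dtB (R : realType) n (x y : 'rV[R]_n) : sqd x y = dt (x - y) (x - y).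
Proof. by rewrite /sqd /dt; apply: eq_bigr => k _; rewrite !mxE expr2. Qed.


Lemma ulift n (k : 'I_n) : unlift ord0 (lift ord0 k) = Some k.
Proof. exact: liftK. Qed.
Lemma uzero n : unlift (@ord0 n) ord0 = None.
Proof. exact: unlift_none. Qed.

Lemma big_unlift (R : realType) n (f : 'I_n -> R) (z : R) :
  \sum_(i < n.+1) (if unlift ord0 i is Some k then f k else z) = z + \sum_k f k.
Proof. rewrite big_ord_recl uzero; congr (_ + _); apply: eq_bigr => k _ /=; by rewrite liftK. Qed.

Lemma big_unliftZ (R : realType) n m (f : 'I_n -> R) (z : R) (P : 'I_n.+1 -> 'rV[R]_m) :
  \sum_(i < n.+1) (if unlift ord0 i is Some k then f k else z) *: P i
  = z *: P ord0 + \sum_k f k *: P (lift ord0 k).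
Proof. rewrite big_ord_recl uzero; congr (_ + _); apply: eq_bigr => k _ /=; by rewrite liftK. Qed.

Lemma aff_span (R : realType) n (P : 'I_n.+1 -> 'rV[R]_n) : aff_indep P ->
  forall y, exists b : 'I_n.+1 -> R, \sum_i b i = 1 /\ y = \sum_i b i *: P i.
Proof.
move=> HP y.
pose U : 'M[R]_n := \matrix_(k < n) (P (lift ord0 k) - P ord0).
have Urow : forall (v : 'rV[R]_n), v *m U = \sum_k v 0 k *: P (lift ord0 k) - (\sum_k v 0 k) *: P ord0.
  move=> v; rewrite mulmx_sum_row scaler_suml -sumrB; apply: eq_bigr => k _.
  by rewrite rowK scalerBr.
have Ufree : row_free U.
  rewrite -kermx_eq0; apply/eqP; apply/eqP; rewrite -submx0; apply/row_subP => i.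
  set v := row i (kermx U).
  have vU : v *m U = 0 by apply/sub_kermxP; exact: row_sub.
  suff -> : v = 0 by rewrite sub0mx.
  pose c := fun i : 'I_n.+1 => if unlift ord0 i is Some k then v 0 k else - \sum_k v 0 k.
  have c0 : \sum_i c i = 0.
    by rewrite /c big_unlift addNr.
  have c1 : \sum_i c i *: P i = 0.
    by move: vU; rewrite Urow /c big_unliftZ scaleNr addrC.
  by apply/rowP => k; rewrite [RHS]mxE -(HP c c0 c1 (lift ord0 k)) /c liftK.
have Ufull : row_full U by rewrite row_full_unit -row_free_unit.
have /submxP [a ha] : (y - P ord0 <= U)%MS by exact: submx_full.
exists (fun i => if unlift ord0 i is Some k then a 0 k else 1 - \sum_k a 0 k).
split.
  by rewrite big_unlift subrK.
rewrite big_unliftZ.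
move: ha; rewrite Urow => /eqP; rewrite subr_eq => /eqP ->.
rewrite scalerBl scale1r; set s := \sum_k _; set t := _ *: P ord0.
by rewrite addrC addrA addrAC.
Qed.

Unset Implicit Arguments.

Theorem theorem5 (R : realType) (d : nat) (V : finType)
    (VA VB : {set V}) (EA EB : rel V) (pA pB : V -> 'rV[R]_d) :
  (1 <= d)%N ->
  is_graph VA EA -> is_graph VB EB ->
  universally_rigid VA EA pA -> universally_rigid VB EB pB ->
  general_position VA pA -> general_position VB pB ->
  (VA :&: VB \proper VA) -> (VA :&: VB \proper VB) ->
  (d.+1 <= #|VA :&: VB|)%N ->
  (forall i, i \in VA :&: VB -> pA i = pB i) ->
  universally_rigid (VA :|: VB) (attach_edges VA VB EA EB)
    (attach_conf VA pA pB).
Proof.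
move=> _ gA gB urA urB gpA gpB _ _ Hcard Hagree d' dd' q Heq.
set p := attach_conf VA pA pB.
have pA_eq : forall i, i \in VA -> p i = pA i by move=> i iA; rewrite /p /attach_conf iA.
have pB_eq : forall i, i \in VB -> p i = pB i.
  move=> i iB; rewrite /p /attach_conf; case: ifP => // iA.
  by apply: Hagree; rewrite inE iA iB.
have cA : congruent VA pA q.
  apply: (urA d' dd') => i j eij.
  have /andP [iA jA] := gA.2.2 i j eij.
  rewrite -(pA_eq i iA) -(pA_eq j jA); apply: Heq.
  by rewrite /attach_edges /removed_edges eij /= andbF.
have cB : congruent VB pB q.
  apply: (urB d' dd') => i j eij.
  have /andP [iB jB] := gB.2.2 i j eij.
  case rem: (removed_edges VA VB EA EB i j).
    move: (rem) => /and4P [_ _ iC jC].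
    move: (iC) (jC); rewrite !inE => /andP [iA _] /andP [jA _].
    by rewrite -(Hagree i iC) -(Hagree j jC); apply: cA.
  rewrite -(pB_eq i iB) -(pB_eq j jB); apply: Heq.
  by rewrite /attach_edges eij orbT rem.
have sqK : forall n n' (x y : 'rV[R]_n) (x' y' : 'rV[R]_n'),
    edist x' y' = edist x y -> sqd x' y' = sqd x y.
  move=> n n' x y x' y' /(congr1 (fun t => t ^+ 2)).
  rewrite /edist !sqr_sqrtr //; apply: sumr_ge0 => k _; exact: sqr_ge0.
have KA : forall i j, i \in VA -> j \in VA -> sqd (q i) (q j) = sqd (p i) (p j).
  by move=> i j iA jA; rewrite (pA_eq i iA) (pA_eq j jA); apply: sqK; apply: cA.
have KB : forall i j, i \in VB -> j \in VB -> sqd (q i) (q j) = sqd (p i) (p j).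
  by move=> i j iB jB; rewrite (pB_eq i iB) (pB_eq j jB); apply: sqK; apply: cB.
pose c := fun i : 'I_d.+1 => enum_val (A := VA :&: VB) (widen_ord Hcard i).
have cinj : injective c.
  move=> i j /enum_val_inj /(congr1 val) /= ij; exact: val_inj.
have cC : forall i, c i \in VA :&: VB by move=> i; exact: enum_valP.
have cA' : forall i, c i \in VA by move=> i; have := cC i; rewrite inE => /andP [].
have cB' : forall i, c i \in VB by move=> i; have := cC i; rewrite inE => /andP [].
have gp : aff_indep (fun i => p (c i)).
  move=> g g0 g1 i; apply: (gpA c cinj cA' g g0) => //.
  by apply: etrans g1; apply: eq_bigr => j _; rewrite pA_eq.
have rep : forall x, x \in VA :|: VB -> exists b : 'I_d.+1 -> R,
    [/\ \sum_i b i = 1, p x = \sum_i b i *: p (c i) & q x = \sum_i b i *: q (c i)].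
  move=> x xAB.
  have [b [b1 hb]] := aff_span gp (p x).
  exists b; split => //.
  pose F := fun i : 'I_d.+2 => if unlift ord0 i is Some k then c k else x.
  pose g := fun i : 'I_d.+2 => if unlift ord0 i is Some k then - b k else 1.
  have g0 : \sum_i g i = 0 by rewrite /g big_unlift sumrN b1 subrr.
  have KF : forall i j, sqd (q (F i)) (q (F j)) = sqd (p (F i)) (p (F j)).
    move: xAB; rewrite inE => /orP [xA | xB] i j.
      apply: KA; rewrite /F; [case: (unlift ord0 i) => // | case: (unlift ord0 j) => //].
    apply: KB; rewrite /F; [case: (unlift ord0 i) => // | case: (unlift ord0 j) => //].
  have := gram g0 KF.
  have F0 : F ord0 = x by rewrite /F uzero.
  have FL : forall k, F (lift ord0 k) = c k by move=> k; rewrite /F liftK.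
  rewrite /g !big_unliftZ !scale1r F0.
  under eq_bigr => k _ do rewrite FL.
  under [X in _ = dt _ (_ + X)]eq_bigr => k _ do rewrite FL.
  under [X in _ = dt (_ + X) _]eq_bigr => k _ do rewrite FL.
  have E : forall (n : nat) (u : 'rV[R]_n) (w : 'I_d.+1 -> 'rV[R]_n),
      u + \sum_k - b k *: w k = u - \sum_k b k *: w k.
    by move=> n u w; rewrite -sumrN; congr (_ + _); apply: eq_bigr => k _; rewrite scaleNr.
  have dt00 : dt (0 : 'rV[R]_d) 0 = 0 by rewrite /dt big1 // => k _; rewrite mxE mul0r.
  by rewrite !E -hb subrr dt00 => /dt_eq0 /eqP; rewrite subr_eq0 => /eqP.
move=> i j iAB jAB.
have [bi [bi1 hpi hqi]] := rep i iAB.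
have [bj [bj1 hpj hqj]] := rep j jAB.
rewrite /edist; congr Num.sqrt.
change (sqd (q i) (q j) = sqd (p i) (p j)).
rewrite !sqd_dtB hpi hqi hpj hqj -!sumrB.
under eq_bigr => k _ do rewrite -scalerBl.
under [X in _ = dt X _]eq_bigr => k _ do rewrite -scalerBl.
under [X in _ = dt _ X]eq_bigr => k _ do rewrite -scalerBl.
apply: gram; first by rewrite sumrB bi1 bj1 subrr.
by move=> k l; apply: KA; apply: cA'.
Qed.
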